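(* Let $c>0$, $d\ge 2$, $m\ge 0$ with $m+\frac d2>1$. Let $\phi_k$ be a real solution, bounded on $[-1,1]$, of $$\big((1-\eta)(1+\eta)^{m+\frac d2}\phi_k'(\eta)\big)'+\Big(\alpha_k-\frac{c^2(1+\eta)}{8}\Big)(1+\eta)^{m+\frac d2-1}\phi_k(\eta)=0,\qquad \eta\in(-1,1),$$ normalized by $\int_{-1}^1(1+t)^{m+\frac d2-1}|\phi_k(t)|^2dt=2^{m+\frac d2-1}$. If $\alpha_k>\frac{c^2}{4}$, then $$\sup_{\eta\in[a_{m,d},1]}\sqrt{(1-\eta)(1+\eta)^{m+\frac d2}}\,|\phi_k(\eta)|\le\sqrt{2^{m+\frac d2+1}\big(m+\tfrac d2-1\big)},\qquad a_{m,d}=\frac{2m+d-2}{2m+d}.$$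
   Context: This is the radial equation of ball prolate spheroidal wave functions $\psi(x)=r^m\phi_k(2r^2-1)Y(\hat x)$, where $\alpha_k=\frac14(\chi^{(m)}_k(c)-m(m+d))$ and $\chi^{(m)}_k(c)$ is the corresponding eigenvalue of $\mathcal{L}_c=-\nabla\cdot(1-\|x\|^2)\nabla-\Delta_0+c^2\|x\|^2$. *)

(* Defs.v *)
From Stdlib Require Import Reals Lra.
From Coquelicot Require Import Coquelicot.
Open Scope R_scope.

(* Real power x^y for x >= 0: equals Rpower x y for x > 0 and 0 for x <= 0
   (the natural value 0^y = 0 for y > 0). *)
Definition rpow (x y : R) : R := if Rle_dec x 0 then 0 else Rpower x y.

Definition beta (m d : nat) : R := INR m + INR d / 2.

Definition a_md (m d : nat) : R := (2 * INR m + INR d - 2) / (2 * INR m + INR d).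

(* Main.v *)
Require Import Defs.
From Stdlib Require Import Reals Lra Psatz Classical.
From Coquelicot Require Import Coquelicot.
Open Scope R_scope.

Lemma D_eq (f : R -> R) (x l l' : R) : is_derive f x l -> l = l' -> is_derive f x l'.
Proof. intros H ->; exact H. Qed.

Lemma D_mult (f g : R -> R) (x df dg : R) : is_derive f x df -> is_derive g x dg ->
  is_derive (fun t => f t * g t) x (df * g x + f x * dg).
Proof. intros Hf Hg. exact (is_derive_mult f g x df dg Hf Hg Rmult_comm). Qed.

Lemma D_plus (f g : R -> R) (x df dg : R) : is_derive f x df -> is_derive g x dg ->
  is_derive (fun t => f t + g t) x (df + dg).
Proof. intros Hf Hg. exact (is_derive_plus f g x df dg Hf Hg). Qed.

Lemma D_const (k x : R) : is_derive (fun _ => k) x 0.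
Proof. exact (is_derive_const k x). Qed.

Lemma D_id (x : R) : is_derive (fun t => t) x 1.
Proof. exact (is_derive_id x). Qed.

Lemma D_inv' (f : R -> R) (x l : R) : is_derive f x l -> f x <> 0 -> is_derive (fun y => / f y) x (- l / f x ^ 2).
Proof. exact (is_derive_inv f x l). Qed.

Lemma cont_of_derive (f : R -> R) (x l : R) : is_derive f x l -> continuity_pt f x.
Proof.
  intros H. assert (Hc : @continuous R_UniformSpace R_UniformSpace f x) by (apply (@ex_derive_continuous R_AbsRing R_NormedModule f x); exists l; exact H).
  apply continuity_pt_filterlim; exact Hc.
Qed.

Lemma mono_up (f df : R -> R) (a b x y : R) :
  (forall t, a < t < b -> is_derive f t (df t)) ->
  (forall t, x <= t <= y -> 0 <= df t) -> a < x -> x <= y -> y < b -> f x <= f y.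
Proof.
  intros Hd Hs Hax Hxy Hyb.
  destruct (Req_dec x y) as [->|Hne]; [lra|].
  destruct (MVT_gen f x y df) as [z [Hz Heq]].
  - rewrite Rmin_left, Rmax_right by lra. intros t Ht; apply Hd; lra.
  - rewrite Rmin_left, Rmax_right by lra. intros t Ht; apply (cont_of_derive f t (df t)); apply Hd; lra.
  - rewrite Rmin_left, Rmax_right in Hz by lra.
    assert (0 <= df z) by (apply Hs; lra).
    assert (0 <= df z * (y - x)) by (apply Rmult_le_pos; lra). lra.
Qed.

Definition wf (b t : R) := Rpower (1+t) (b-1).

Lemma rpow_eq x y : 0 < x -> rpow x y = Rpower x y.
Proof. intros H; unfold rpow; destruct (Rle_dec x 0); [lra|reflexivity]. Qed.

Lemma wf_pos b t : -1 < t -> 0 < wf b t.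
Proof. intros; unfold wf, Rpower; apply exp_pos. Qed.

Lemma Rpower_b b t : -1 < t -> Rpower (1+t) b = (1+t) * wf b t.
Proof.
  intros H. unfold wf. replace b with ((b-1)+1) at 1 by ring.
  rewrite Rpower_plus, Rpower_1 by lra. ring.
Qed.

Lemma D_Rpow_shift (e t : R) : -1 < t ->
  is_derive (fun s => Rpower (1+s) e) t (e * Rpower (1+t) e / (1+t)).
Proof.
  intros H.
  assert (H1 : is_derive (fun s => Rpower s e) (1+t) (e * Rpower (1+t) (e-1))).
  { apply is_derive_Reals. apply derivable_pt_lim_power. lra. }
  assert (H2 : is_derive (fun s => 1 + s) t 1).
  { apply (D_eq _ _ (0+1)); [apply D_plus; [apply D_const|apply D_id] | ring]. }
  pose proof (is_derive_comp (fun s => Rpower s e) (fun s => 1 + s) t _ _ H1 H2) as H3.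
  apply (D_eq _ _ _ _ H3). unfold scal; simpl; unfold mult; simpl.
  assert (Rpower (1+t) e = Rpower (1+t) (e-1) * (1+t)).
  { replace e with ((e-1)+1) at 1 by ring. rewrite Rpower_plus, Rpower_1 by lra. ring. }
  rewrite H0. field. lra.
Qed.

Lemma D_wf b t : -1 < t -> is_derive (wf b) t ((b-1) * wf b t / (1+t)).
Proof. intros H; unfold wf; apply D_Rpow_shift; exact H. Qed.

Definition qf (c al t : R) := al - c^2*(1+t)/8.
Definition pf (b t : R) := (1-t)*(1+t)*wf b t.
Definition rf (b c al t : R) := (b-1) * qf c al t - c^2*(1+t)/8.
Definition Hf (b c al : R) (phi Y : R -> R) (t : R) :=
  pf b t * phi t ^ 2 + Y t ^ 2 / (qf c al t * wf b t).
Definition Kf (b c al : R) (phi Y : R -> R) (t : R) :=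
  pf b t * wf b t * phi t ^ 2 + Y t ^ 2 / qf c al t.

Lemma H_deriv b c al phi Y t :
  -1 < t < 1 -> qf c al t <> 0 ->
  is_derive phi t (Y t / pf b t) ->
  is_derive Y t (- (qf c al t * wf b t * phi t)) ->
  is_derive (Hf b c al phi Y) t
    (wf b t * ((b-1) - (b+1)*t) * phi t ^ 2
     - Y t ^ 2 * (wf b t * rf b c al t / (1+t)) / (qf c al t * wf b t) ^ 2).
Proof.
  intros Ht Hq Hphi HY.
  pose proof (D_wf b t (proj1 Ht)) as Hw.
  pose proof (wf_pos b t (proj1 Ht)) as Hwp.
  unfold Hf, pf, qf. auto_derive.
  - repeat split; try (eexists; eassumption). unfold qf in Hq.
    apply Rmult_integral_contrapositive; split; lra.
  - replace (Derive (fun x => phi x) t) with (Y t / pf b t)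
      by (symmetry; apply is_derive_unique; exact Hphi).
    replace (Derive (fun x => Y x) t) with (- (qf c al t * wf b t * phi t))
      by (symmetry; apply is_derive_unique; exact HY).
    replace (Derive (fun x => wf b x) t) with ((b-1) * wf b t / (1+t))
      by (symmetry; apply is_derive_unique; exact Hw).
    unfold pf, rf, qf in *. field. repeat split; lra.
Qed.

Lemma K_deriv b c al phi Y t :
  -1 < t < 1 -> qf c al t <> 0 ->
  is_derive phi t (Y t / pf b t) ->
  is_derive Y t (- (qf c al t * wf b t * phi t)) ->
  is_derive (Kf b c al phi Y) t
    (wf b t ^ 2 * ((2*b-2) - 2*b*t) * phi t ^ 2
     + c^2/8 * Y t ^ 2 / qf c al t ^ 2).
Proof.
  intros Ht Hq Hphi HY.
  pose proof (D_wf b t (proj1 Ht)) as Hw.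
  pose proof (wf_pos b t (proj1 Ht)) as Hwp.
  unfold Kf, pf, qf. auto_derive.
  - repeat split; try (eexists; eassumption). unfold qf in Hq. lra.
  - replace (Derive (fun x => phi x) t) with (Y t / pf b t)
      by (symmetry; apply is_derive_unique; exact Hphi).
    replace (Derive (fun x => Y x) t) with (- (qf c al t * wf b t * phi t))
      by (symmetry; apply is_derive_unique; exact HY).
    replace (Derive (fun x => wf b x) t) with ((b-1) * wf b t / (1+t))
      by (symmetry; apply is_derive_unique; exact Hw).
    unfold pf, rf, qf in *. field. repeat split; lra.
Qed.

Definition f0 (b : R) (phi : R -> R) (s : R) := rpow (1+s) (b-1) * Rabs (phi s) ^ 2.
Definition Wf (b : R) (phi : R -> R) (t : R) := RInt (f0 b phi) (-1) t.

Lemma f0_eq b phi s : -1 < s -> f0 b phi s = wf b s * phi s ^ 2.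
Proof.
  intros H. unfold f0, wf. rewrite rpow_eq by lra. 
  rewrite pow2_abs. reflexivity.
Qed.

Lemma f0_nonneg b phi s : 0 <= f0 b phi s.
Proof.
  unfold f0, rpow. destruct (Rle_dec (1+s) 0).
  - lra.
  - apply Rmult_le_pos. unfold Rpower; left; apply exp_pos. apply pow_le, Rabs_pos.
Qed.

Lemma W_deriv b phi (N : R) t :
  is_RInt (f0 b phi) (-1) 1 N ->
  (forall s, -1 < s < 1 -> ex_derive phi s) ->
  -1 < t < 1 -> is_derive (Wf b phi) t (wf b t * phi t ^ 2).
Proof.
  intros HI Hd Ht.
  rewrite <- f0_eq by lra.
  apply is_derive_RInt with (a := -1).
  - apply (locally_interval _ t (-1) 1); simpl; try lra.
    intros y Hy1 Hy2. apply RInt_correct.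
    apply (@ex_RInt_Chasles_1 R_CompleteNormedModule) with 1; [lra|]. exists N; exact HI.
  - apply continuous_ext_loc with (fun s => wf b s * phi s ^ 2).
    + apply (locally_interval _ t (-1) 1); simpl; try lra.
      intros y Hy1 Hy2. symmetry; apply f0_eq; lra.
    + apply (@ex_derive_continuous R_AbsRing R_NormedModule).
      pose proof (D_wf b t (proj1 Ht)) as Hw.
      auto_derive. repeat split. exists ((b-1) * wf b t / (1+t)); exact Hw. apply Hd; lra.
Qed.

Lemma W_bounds b phi (N : R) t :
  is_RInt (f0 b phi) (-1) 1 N -> -1 <= t <= 1 ->
  0 <= Wf b phi t /\ Wf b phi t <= N.
Proof.
  intros HI Ht.
  assert (He : ex_RInt (f0 b phi) (-1) 1) by (exists N; exact HI).
  assert (H1 : ex_RInt (f0 b phi) (-1) t) by (apply (@ex_RInt_Chasles_1 R_CompleteNormedModule) with 1; [lra|exact He]).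
  assert (H2 : ex_RInt (f0 b phi) t 1) by (apply (@ex_RInt_Chasles_2 R_CompleteNormedModule) with (-1); [lra|exact He]).
  pose proof (RInt_Chasles (f0 b phi) (-1) t 1 H1 H2) as HC.
  rewrite (is_RInt_unique _ _ _ _ HI) in HC.
  assert (0 <= RInt (f0 b phi) (-1) t) by (apply RInt_ge_0; [lra|exact H1|intros; apply f0_nonneg]).
  assert (0 <= RInt (f0 b phi) t 1) by (apply RInt_ge_0; [lra|exact H2|intros; apply f0_nonneg]).
  unfold Wf. unfold plus in HC; simpl in HC. split; lra.
Qed.

Lemma blowup_right (f : R -> R) (s0 k M : R) : s0 < 1 -> 0 < k ->
  (forall t, s0 < t < 1 -> ex_derive f t /\ k / (1 - t) <= Derive f t) ->
  exists t, s0 < t < 1 /\ M < f t.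
Proof.
  intros Hs0 Hk Hd.
  set (s := (s0 + 1) / 2).
  set (L := (Rabs (f s) + Rabs M + 1) / k).
  assert (HL : 0 <= L) by (unfold L; apply Rdiv_le_0_compat; [pose proof (Rabs_pos (f s)); pose proof (Rabs_pos M); lra | lra]).
  set (t := 1 - (1 - s) * exp (- L)).
  assert (He1 : exp (- L) <= 1) by (rewrite <- exp_0; apply exp_le_3 || (destruct (Req_dec L 0) as [->|]; [rewrite Ropp_0; lra | left; apply exp_increasing; lra])).
  assert (He0 : 0 < exp (- L)) by apply exp_pos.
  assert (Ht : s <= t < 1).
  { unfold t, s in *. split; [|apply Rlt_le_trans with (1 - 0); [|lra]; apply Rplus_lt_compat_l, Ropp_lt_contravar, Rmult_lt_0_compat; lra].
    assert ((1 - (s0+1)/2) * exp (-L) <= (1 - (s0+1)/2) * 1) by (apply Rmult_le_compat_l; lra). lra. }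
  exists t. split; [unfold s in Ht; lra|].
  set (g := fun x => f x + k * ln (1 - x)).
  assert (Hg : g s <= g t).
  { apply (mono_up g (fun x => Derive f x + k * (- 1 / (1 - x))) s0 1); unfold s in *; try lra.
    - intros x Hx. destruct (Hd x Hx) as [[l Hl] _]. unfold g. auto_derive.
      + split; [exists l; exact Hl|]. split; [lra|auto].
      + change (Derive (fun x0 => f x0) x) with (Derive f x). field. lra.
    - intros x Hx. destruct (Hd x) as [_ Hb]; [unfold s in *; lra|].
      assert (k * (-1 / (1 - x)) = - (k / (1 - x))) by (field; lra). lra. }
  unfold g in Hg.
  assert (Hln : ln (1 - t) = ln (1 - s) - L).
  { unfold t. replace (1 - (1 - (1 - s) * exp (- L))) with ((1 - s) * exp (- L)) by ring.
    rewrite ln_mult by (unfold s; lra). rewrite ln_exp. ring. }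
  rewrite Hln in Hg.
  assert (k * L = Rabs (f s) + Rabs M + 1) by (unfold L; field; lra).
  pose proof (Rle_abs M). pose proof (Rabs_pos (f s)). pose proof (Rle_abs (- f s)). rewrite Rabs_Ropp in *.
  lra.
Qed.

Lemma blowup_left (f : R -> R) (s0 k e M : R) : -1 < s0 -> 0 < k -> 0 < e ->
  (forall t, -1 < t < s0 -> ex_derive f t /\ k * Rpower (1+t) (-e) / (1+t) <= Derive f t) ->
  exists t, -1 < t < s0 /\ f t < M.
Proof.
  intros Hs0 Hk He Hd.
  set (s := (-1 + s0) / 2).
  assert (Hs : -1 < s < s0) by (unfold s; lra).
  set (P := Rpower (1+s) (-e)).
  assert (HP : 0 < P) by (unfold P, Rpower; apply exp_pos).
  set (Z := (Rabs (f s) + Rabs M + 1) / (k * P)).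
  assert (HZ : 0 <= Z) by (unfold Z; apply Rdiv_le_0_compat; [pose proof (Rabs_pos (f s)); pose proof (Rabs_pos M); lra | apply Rmult_lt_0_compat; lra]).
  set (t := -1 + (1 + s) * exp (- Z)).
  assert (He1 : exp (- Z) <= 1).
  { rewrite <- exp_0. destruct (Req_dec Z 0) as [->|]; [rewrite Ropp_0; lra | left; apply exp_increasing; lra]. }
  assert (He0 : 0 < exp (- Z)) by apply exp_pos.
  assert (Ht : -1 < t <= s).
  { unfold t. split. assert (0 < (1+s) * exp (-Z)) by (apply Rmult_lt_0_compat; lra). lra.
    assert ((1+s) * exp (-Z) <= (1+s) * 1) by (apply Rmult_le_compat_l; lra). lra. }
  exists t. split; [lra|].
  set (g := fun x => f x + (k/e) * Rpower (1+x) (-e)).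
  assert (Hg : g t <= g s).
  { apply (mono_up g (fun x => Derive f x + (k/e) * (- e * Rpower (1+x) (-e) / (1+x))) (-1) s0); try lra.
    - intros x Hx. destruct (Hd x Hx) as [[l Hl] _]. unfold g.
      apply (D_eq _ _ (l + (0 * Rpower (1+x) (-e) + k/e * (- e * Rpower (1+x) (-e) / (1+x))))).
      + apply D_plus; [exact Hl|]. apply (D_mult (fun _ => k/e) (fun y => Rpower (1+y) (-e))).
        apply D_const. apply D_Rpow_shift; lra.
      + rewrite (is_derive_unique _ _ _ Hl). ring.
    - intros x Hx. destruct (Hd x) as [_ Hb]; [lra|].
      assert ((k/e) * (- e * Rpower (1+x) (-e) / (1+x)) = - (k * Rpower (1+x) (-e) / (1+x))) by (field; lra). lra. }
  unfold g in Hg.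
  assert (HPt : Rpower (1+t) (-e) = P * exp (e * Z)).
  { unfold P, t, Rpower. replace (1 + (-1 + (1+s) * exp (-Z))) with ((1+s) * exp (-Z)) by ring.
    rewrite ln_mult by lra. rewrite ln_exp, <- exp_plus. f_equal. ring. }
  rewrite HPt in Hg.
  pose proof (exp_ineq1_le (e * Z)).
  assert (Hkz : k * P * Z = Rabs (f s) + Rabs M + 1) by (unfold Z; field; split; lra).
  assert (Hm : (k/e) * (P * exp (e*Z)) >= (k/e) * P + k * P * Z).
  { assert ((k/e) * (P * exp (e*Z)) >= (k/e) * (P * (1 + e*Z))).
    { apply Rle_ge, Rmult_le_compat_l; [apply Rdiv_le_0_compat; lra|]. apply Rmult_le_compat_l; lra. }
    assert ((k/e) * (P * (1 + e*Z)) = (k/e)*P + k*P*Z) by (field; lra). lra. }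
  pose proof (Rle_abs M). pose proof (Rle_abs (f s)). pose proof (Rle_abs (- M)). rewrite Rabs_Ropp in *.
  fold P in Hg. lra.
Qed.

Lemma sign_keep_right (Y : R -> R) (s T : R) :
  (forall x, s <= x < T -> continuity_pt Y x) ->
  (forall x, s <= x < T -> Y x <> 0) -> 0 < Y s ->
  forall t, s <= t < T -> 0 < Y t.
Proof.
  intros Hc Hn Hs t Ht.
  destruct (Rlt_le_dec 0 (Y t)) as [|Hle]; [assumption|exfalso].
  destruct (Req_dec (Y t) 0) as [H0|H0]; [exact (Hn t Ht H0)|].
  assert (Hst : s < t) by (destruct (Req_dec s t) as [<-|]; [lra|lra]).
  destruct (Ranalysis5.IVT_interv (fun x => - Y x) s t) as [z [Hz Hz0]].
  - intros a Ha. apply (continuity_pt_opp Y a). apply Hc; lra.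
  - exact Hst.
  - lra.
  - lra.
  - apply (Hn z); [lra|lra].
Qed.

Lemma sign_keep_left (Y : R -> R) (T s : R) :
  (forall x, T < x <= s -> continuity_pt Y x) ->
  (forall x, T < x <= s -> Y x <> 0) -> 0 < Y s ->
  forall t, T < t <= s -> 0 < Y t.
Proof.
  intros Hc Hn Hs t Ht.
  destruct (Rlt_le_dec 0 (Y t)) as [|Hle]; [assumption|exfalso].
  destruct (Req_dec (Y t) 0) as [H0|H0]; [exact (Hn t Ht H0)|].
  assert (Hst : t < s) by (destruct (Req_dec s t) as [<-|]; [lra|lra]).
  destruct (Ranalysis5.IVT_interv Y t s) as [z [Hz Hz0]].
  - intros a Ha. apply Hc; lra.
  - exact Hst.
  - lra.
  - lra.
  - apply (Hn z); [lra|lra].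
Qed.

Lemma div_le_helper (a A e1 e2 : R) : 0 < a -> a <= A -> 0 <= e1 -> e1 <= e2 -> e1 / A <= e2 / a.
Proof.
  intros. unfold Rdiv. apply Rmult_le_compat; try lra.
  left; apply Rinv_0_lt_compat; lra. apply Rinv_le_contravar; lra.
Qed.

Lemma wf_le1 b t : 1 <= b -> -1 < t <= 1 -> wf b t <= wf b 1.
Proof. intros. unfold wf. apply Rle_Rpower_l; lra. Qed.

Lemma wf_ge1 b t : 1 <= b -> 0 <= t -> 1 <= wf b t.
Proof.
  intros. unfold wf. replace 1 with (Rpower 1 (b-1)) at 1.
  apply Rle_Rpower_l; lra. unfold Rpower. rewrite ln_1, Rmult_0_r. apply exp_0.
Qed.

Lemma pf_pos b t : -1 < t < 1 -> 0 < pf b t.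
Proof.
  intros. unfold pf. pose proof (wf_pos b t (proj1 H)).
  apply Rmult_lt_0_compat; [apply Rmult_lt_0_compat|]; lra.
Qed.

Definition ODE (b c al : R) (phi Y : R -> R) :=
  forall t, -1 < t < 1 ->
    is_derive phi t (Y t / pf b t) /\ is_derive Y t (- (qf c al t * wf b t * phi t)).

Lemma Y_right b c al phi Y M :
  1 <= b -> ODE b c al phi Y -> (forall t, -1 <= t <= 1 -> Rabs (phi t) <= M) ->
  forall eps t1, 0 < eps -> -1 < t1 < 1 -> exists t, t1 < t < 1 /\ Rabs (Y t) < eps.
Proof.
  intros Hb Hode Hbd eps t1 He Ht1.
  apply NNPP; intro Hno.
  assert (Hge : forall t, t1 < t < 1 -> eps <= Rabs (Y t)).
  { intros t Ht. apply Rnot_lt_le; intro Hl. apply Hno; exists t; split; assumption. }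
  set (s := (t1 + 1) / 2).
  assert (Hs : t1 < s < 1) by (unfold s; lra).
  assert (Hcont : forall x, s <= x < 1 -> continuity_pt Y x).
  { intros x Hx. apply (cont_of_derive Y x _ (proj2 (Hode x ltac:(lra)))). }
  assert (Hnz : forall x, s <= x < 1 -> Y x <> 0).
  { intros x Hx H0. pose proof (Hge x ltac:(lra)). rewrite H0, Rabs_R0 in H. lra. }
  set (w1 := wf b 1).
  assert (Hw1 : 0 < w1) by (apply wf_pos; lra).
  assert (Hpf : forall t, s < t < 1 -> 0 < pf b t <= (1 - t) * 2 * w1).
  { intros t Ht. split. apply pf_pos; lra. unfold pf.
    pose proof (wf_le1 b t Hb ltac:(lra)). pose proof (wf_pos b t ltac:(lra)). fold w1 in H.
    apply Rmult_le_compat; try lra. apply Rmult_le_pos; lra. apply Rmult_le_compat_l; lra. }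
  assert (Hk : 0 < eps / (2 * w1)) by (apply Rdiv_lt_0_compat; lra).
  destruct (Rlt_le_dec 0 (Y s)) as [Hpos|Hneg].
  - pose proof (sign_keep_right Y s 1 Hcont Hnz Hpos) as Hsk.
    destruct (blowup_right phi s (eps / (2 * w1)) M (proj2 Hs) Hk) as [t [Ht HM]].
    + intros t Ht. destruct (Hode t ltac:(lra)) as [Hd _]. split; [exists (Y t / pf b t); exact Hd|].
      rewrite (is_derive_unique _ _ _ Hd).
      replace (eps / (2 * w1) / (1 - t)) with (eps / ((1 - t) * 2 * w1)) by (field; lra).
      pose proof (Hsk t ltac:(lra)). pose proof (Hge t ltac:(lra)). rewrite Rabs_right in H0 by lra.
      apply div_le_helper; try lra; apply Hpf; lra.
    + pose proof (Hbd t ltac:(lra)). pose proof (Rle_abs (phi t)). lra.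
  - assert (Hneg' : 0 < - Y s) by (pose proof (Hnz s ltac:(lra)); lra).
    pose proof (sign_keep_right (fun x => - Y x) s 1
      (fun x Hx => continuity_pt_opp Y x (Hcont x Hx))
      (fun x Hx H0 => Hnz x Hx ltac:(lra)) Hneg') as Hsk.
    destruct (blowup_right (fun x => - phi x) s (eps / (2 * w1)) M (proj2 Hs) Hk) as [t [Ht HM]].
    + intros t Ht. destruct (Hode t ltac:(lra)) as [Hd _].
      pose proof (is_derive_opp phi t _ Hd) as Hd'.
      split; [eexists; exact Hd'|].
      replace (Derive (fun x => - phi x) t) with (- (Y t / pf b t))
        by (symmetry; apply (is_derive_unique (fun x => - phi x)); exact Hd').
      replace (- (Y t / pf b t)) with (- Y t / pf b t) by (field; pose proof (pf_pos b t ltac:(lra)); lra).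
      replace (eps / (2 * w1) / (1 - t)) with (eps / ((1 - t) * 2 * w1)) by (field; lra).
      pose proof (Hsk t ltac:(lra)). simpl in H. pose proof (Hge t ltac:(lra)).
      rewrite Rabs_left in H0 by lra.
      apply div_le_helper; try lra; apply Hpf; lra.
    + pose proof (Hbd t ltac:(lra)). pose proof (Rle_abs (- phi t)). rewrite Rabs_Ropp in H0. lra.
Qed.

Lemma sqrt_lower (Y e R0 : R) : 0 < Y -> 0 < R0 -> 0 <= e -> e * R0 ^ 2 <= Y ^ 2 -> sqrt e * R0 <= Y.
Proof.
  intros HY HR He H.
  pose proof (sqrt_sqrt e He). pose proof (sqrt_pos e).
  nra.
Qed.

Lemma Y_left b c al phi Y M :
  1 < b -> ODE b c al phi Y -> (forall t, -1 <= t <= 1 -> Rabs (phi t) <= M) ->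
  forall eps t1, 0 < eps -> -1 < t1 < 1 -> exists t, -1 < t < t1 /\ Y t ^ 2 < eps * wf b t.
Proof.
  intros Hb Hode Hbd eps t1 He Ht1.
  apply NNPP; intro Hno.
  assert (Hge : forall t, -1 < t < t1 -> eps * wf b t <= Y t ^ 2).
  { intros t Ht. apply Rnot_lt_le; intro Hl. apply Hno; exists t; split; assumption. }
  set (s := (-1 + t1) / 2).
  assert (Hs : -1 < s < t1) by (unfold s; lra).
  assert (Hcont : forall x, -1 < x <= s -> continuity_pt Y x).
  { intros x Hx. apply (cont_of_derive Y x _ (proj2 (Hode x ltac:(lra)))). }
  assert (Hnz : forall x, -1 < x <= s -> Y x <> 0).
  { intros x Hx H0. pose proof (Hge x ltac:(lra)). rewrite H0 in H.
    pose proof (wf_pos b x ltac:(lra)). assert (0 < eps * wf b x) by (apply Rmult_lt_0_compat; lra).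
    simpl in H; lra. }
  set (e := (b - 1) / 2).
  assert (He0 : 0 < e) by (unfold e; lra).
  assert (Hk : 0 < sqrt eps / 2) by (apply Rdiv_lt_0_compat; [apply sqrt_lt_R0; lra|lra]).
  assert (Key : forall t Yt, -1 < t < s -> 0 < Yt -> eps * wf b t <= Yt ^ 2 ->
            sqrt eps / 2 * Rpower (1+t) (-e) / (1+t) <= Yt / pf b t).
  { intros t Yt Ht HY HYge.
    set (Re := Rpower (1+t) e).
    assert (HRe : 0 < Re) by (unfold Re, Rpower; apply exp_pos).
    assert (Hw : wf b t = Re ^ 2).
    { unfold wf, Re. replace (b-1) with (e+e) by (unfold e; field). rewrite Rpower_plus. ring. }
    rewrite Rpower_Ropp. fold Re.
    replace (sqrt eps / 2 * / Re / (1 + t)) with (sqrt eps * Re / (2 * (1+t) * Re ^ 2)) by (field; lra).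
    apply div_le_helper.
    - apply pf_pos; lra.
    - unfold pf. rewrite Hw. assert (0 <= (1+t) * Re^2) by (apply Rmult_le_pos; [lra|apply pow2_ge_0]).
      assert ((1 - t) * (1 + t) * Re ^ 2 = (1-t) * ((1+t) * Re^2)) by ring.
      assert (2 * (1 + t) * Re ^ 2 = 2 * ((1+t) * Re^2)) by ring. nra.
    - left; apply Rmult_lt_0_compat; [apply sqrt_lt_R0; lra|lra].
    - apply sqrt_lower; try lra. rewrite <- Hw. exact HYge. }
  destruct (Rlt_le_dec 0 (Y s)) as [Hpos|Hneg].
  - pose proof (sign_keep_left Y (-1) s Hcont Hnz Hpos) as Hsk.
    destruct (blowup_left phi s (sqrt eps / 2) e (- M) (proj1 Hs) Hk He0) as [t [Ht HM]].
    + intros t Ht. destruct (Hode t ltac:(lra)) as [Hd _]. split; [exists (Y t / pf b t); exact Hd|].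
      rewrite (is_derive_unique _ _ _ Hd).
      apply Key; [lra| apply Hsk; lra | apply Hge; lra].
    + pose proof (Hbd t ltac:(lra)). pose proof (Rle_abs (- phi t)). rewrite Rabs_Ropp in H0. lra.
  - assert (Hneg' : 0 < - Y s) by (pose proof (Hnz s ltac:(lra)); lra).
    pose proof (sign_keep_left (fun x => - Y x) (-1) s
      (fun x Hx => continuity_pt_opp Y x (Hcont x Hx))
      (fun x Hx H0 => Hnz x Hx ltac:(lra)) Hneg') as Hsk.
    destruct (blowup_left (fun x => - phi x) s (sqrt eps / 2) e (- M) (proj1 Hs) Hk He0) as [t [Ht HM]].
    + intros t Ht. destruct (Hode t ltac:(lra)) as [Hd _].
      pose proof (is_derive_opp phi t _ Hd) as Hd'.
      split; [eexists; exact Hd'|].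
      replace (Derive (fun x => - phi x) t) with (- (Y t / pf b t))
        by (symmetry; apply (is_derive_unique (fun x => - phi x)); exact Hd').
      replace (- (Y t / pf b t)) with (- Y t / pf b t) by (field; pose proof (pf_pos b t ltac:(lra)); lra).
      apply Key; [lra| apply (Hsk t); lra | ].
      replace ((- Y t) ^ 2) with (Y t ^ 2) by ring. apply Hge; lra.
    + pose proof (Hbd t ltac:(lra)). pose proof (Rle_abs (phi t)). lra.
Qed.

Lemma qf_ge1 c al t : t <= 1 -> qf c al 1 <= qf c al t.
Proof. intros. unfold qf. pose proof (pow2_ge_0 c). nra. Qed.

Lemma phi_sq (x M : R) : Rabs x <= M -> x ^ 2 <= M ^ 2.
Proof. intros H. pose proof (Rabs_pos x). rewrite <- (pow2_abs x). nra. Qed.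

Lemma HK_right b c al phi Y M :
  1 <= b -> ODE b c al phi Y -> (forall t, -1 <= t <= 1 -> Rabs (phi t) <= M) ->
  0 < qf c al 1 ->
  forall eps t1, 0 < eps -> -1 < t1 < 1 ->
  exists t, t1 < t < 1 /\ Hf b c al phi Y t <= eps /\ Kf b c al phi Y t <= eps.
Proof.
  intros Hb Hode Hbd Hq1 eps t1 He Ht1.
  set (w1 := wf b 1). set (q1 := qf c al 1).
  assert (Hq1' : 0 < q1) by exact Hq1.
  assert (Hw1 : 1 <= w1) by (apply wf_ge1; lra).
  assert (HM2 : 0 <= M ^ 2) by apply pow2_ge_0.
  set (C := 2 * w1 ^ 2 * M ^ 2 + / q1 + 1).
  assert (HC : 1 <= C).
  { unfold C. assert (0 < / q1) by (apply Rinv_0_lt_compat; exact Hq1).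
    assert (0 <= w1^2 * M^2) by (apply Rmult_le_pos; [apply pow2_ge_0|lra]). lra. }
  set (dl := Rmin 1 (eps / C)).
  assert (Hdl : 0 < dl <= 1 /\ dl * C <= eps).
  { unfold dl. split; [split|].
    - apply Rmin_pos; [lra|apply Rdiv_lt_0_compat; lra].
    - apply Rmin_l.
    - assert (Rmin 1 (eps / C) <= eps / C) by apply Rmin_r.
      assert (eps / C * C = eps) by (field; lra).
      assert (Rmin 1 (eps / C) * C <= eps / C * C) by (apply Rmult_le_compat_r; lra). lra. }
  set (t1' := Rmax (Rmax t1 0) (1 - dl)).
  assert (Ht1' : -1 < t1' < 1 /\ t1 <= t1' /\ 0 <= t1' /\ 1 - dl <= t1').
  { unfold t1'. pose proof (Rmax_l (Rmax t1 0) (1 - dl)). pose proof (Rmax_r (Rmax t1 0) (1 - dl)).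
    pose proof (Rmax_l t1 0). pose proof (Rmax_r t1 0).
    assert (Rmax (Rmax t1 0) (1 - dl) < 1).
    { apply Rmax_lub_lt; [apply Rmax_lub_lt|]; lra. }
    repeat split; lra. }
  destruct (Y_right b c al phi Y M Hb Hode Hbd dl t1' (proj1 (proj1 Hdl)) (proj1 Ht1')) as [t [Ht HY]].
  exists t. split; [lra|].
  assert (Hw : 1 <= wf b t <= w1) by (split; [apply wf_ge1; lra | apply wf_le1; lra]).
  assert (Hq : q1 <= qf c al t) by (apply qf_ge1; lra).
  assert (Hphi : phi t ^ 2 <= M ^ 2) by (apply phi_sq, Hbd; lra).
  assert (HY2 : Y t ^ 2 <= dl).
  { pose proof (Rabs_pos (Y t)). rewrite <- (pow2_abs (Y t)). nra. }
  assert (Hpf : 0 <= pf b t <= dl * 2 * w1).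
  { unfold pf. split. apply Rmult_le_pos; [apply Rmult_le_pos|]; lra.
    apply Rmult_le_compat; try lra. apply Rmult_le_pos; lra. apply Rmult_le_compat; lra. }
  assert (HYq : Y t ^ 2 / (qf c al t * wf b t) <= dl / q1).
  { apply div_le_helper; [exact Hq1 | | apply pow2_ge_0 | lra].
    assert (0 < q1) by exact Hq1. nra. }
  assert (HYq' : Y t ^ 2 / qf c al t <= dl / q1).
  { apply div_le_helper; [exact Hq1 | lra | apply pow2_ge_0 | lra]. }
  assert (Hdq : dl / q1 = dl * / q1) by reflexivity.
  assert (Hiq : 0 < / q1) by (apply Rinv_0_lt_compat; exact Hq1).
  assert (E1 : pf b t * phi t ^ 2 <= dl * 2 * w1 * M ^ 2).
  { apply Rmult_le_compat; try lra; apply pow2_ge_0. }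
  assert (E2 : pf b t * wf b t * phi t ^ 2 <= dl * 2 * w1 * w1 * M ^ 2).
  { apply Rmult_le_compat; try lra; [apply Rmult_le_pos; lra|apply pow2_ge_0|].
    apply Rmult_le_compat; lra. }
  assert (E3 : dl * 2 * w1 * M ^ 2 <= dl * 2 * w1 * w1 * M ^ 2).
  { assert (0 <= dl * 2 * w1) by (apply Rmult_le_pos; [apply Rmult_le_pos|]; lra).
    assert (0 <= dl * 2 * w1 * M^2) by (apply Rmult_le_pos; lra).
    assert (0 <= dl * 2 * w1 * M^2 * (w1 - 1)) by (apply Rmult_le_pos; lra). nra. }
  assert (E4 : dl * C = dl * 2 * w1 * w1 * M ^ 2 + dl * / q1 + dl) by (unfold C; ring).
  unfold Hf, Kf. split; lra.
Qed.

Lemma H_left b c al phi Y M :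
  1 < b -> ODE b c al phi Y -> (forall t, -1 <= t <= 1 -> Rabs (phi t) <= M) ->
  0 < qf c al 1 ->
  forall eps t1, 0 < eps -> -1 < t1 < 1 ->
  exists t, -1 < t < t1 /\ Hf b c al phi Y t <= eps.
Proof.
  intros Hb Hode Hbd Hq1 eps t1 He Ht1.
  set (w1 := wf b 1). set (q1 := qf c al 1).
  assert (Hq1' : 0 < q1) by exact Hq1.
  assert (Hw1 : 1 <= w1) by (apply wf_ge1; lra).
  assert (HM2 : 0 <= M ^ 2) by apply pow2_ge_0.
  set (dl := eps / (4 * w1 * M ^ 2 + 1)).
  assert (Hden : 0 < 4 * w1 * M ^ 2 + 1) by (assert (0 <= w1 * M^2) by (apply Rmult_le_pos; lra); lra).
  assert (Hdl : 0 < dl) by (apply Rdiv_lt_0_compat; lra).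
  assert (Hdl2 : 2 * dl * w1 * M ^ 2 <= eps / 2).
  { unfold dl. assert (2 * (eps / (4 * w1 * M ^ 2 + 1)) * w1 * M ^ 2 = eps * (2 * w1 * M^2) / (4 * w1 * M ^ 2 + 1)) by (field; lra).
    rewrite H. apply Rmult_le_reg_r with (4 * w1 * M ^ 2 + 1); [lra|].
    unfold Rdiv. rewrite Rmult_assoc, Rinv_l, Rmult_1_r by lra.
    assert (0 <= w1 * M^2) by (apply Rmult_le_pos; lra). nra. }
  set (t1' := Rmin t1 (-1 + dl)).
  assert (Ht1' : -1 < t1' < 1 /\ t1' <= t1 /\ t1' <= -1 + dl).
  { unfold t1'. pose proof (Rmin_l t1 (-1 + dl)). pose proof (Rmin_r t1 (-1 + dl)).
    assert (-1 < Rmin t1 (-1 + dl)) by (apply Rmin_glb_lt; lra). repeat split; lra. }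
  set (e' := eps * q1 / 2).
  assert (He' : 0 < e') by (unfold e'; apply Rdiv_lt_0_compat; [apply Rmult_lt_0_compat|]; lra).
  destruct (Y_left b c al phi Y M Hb Hode Hbd e' t1' He' (proj1 Ht1')) as [t [Ht HY]].
  exists t. split; [lra|].
  assert (Hw : 0 < wf b t <= w1) by (split; [apply wf_pos; lra | apply wf_le1; lra]).
  assert (Hq : q1 <= qf c al t) by (apply qf_ge1; lra).
  assert (Hphi : phi t ^ 2 <= M ^ 2) by (apply phi_sq, Hbd; lra).
  assert (Hpf : 0 <= pf b t <= 2 * dl * w1).
  { unfold pf. split. apply Rmult_le_pos; [apply Rmult_le_pos|]; lra.
    replace (2 * dl * w1) with (2 * dl * w1) by ring.
    apply Rmult_le_compat; try lra. apply Rmult_le_pos; lra. apply Rmult_le_compat; lra. }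
  assert (E1 : pf b t * phi t ^ 2 <= 2 * dl * w1 * M ^ 2).
  { apply Rmult_le_compat; try lra; apply pow2_ge_0. }
  assert (E2 : Y t ^ 2 / (qf c al t * wf b t) <= e' * wf b t / (q1 * wf b t)).
  { apply div_le_helper; try lra; [apply Rmult_lt_0_compat; lra| |apply pow2_ge_0].
    apply Rmult_le_compat_r; lra. }
  assert (E3 : e' * wf b t / (q1 * wf b t) = eps / 2) by (unfold e'; field; lra).
  unfold Hf. lra.
Qed.

Lemma sign_term (Y2 w r u D : R) : 0 <= Y2 -> 0 < w -> r <= 0 -> 0 < u -> 0 < D -> Y2 * (w * r / u) / D <= 0.
Proof.
  intros. unfold Rdiv. assert (0 < / u) by (apply Rinv_0_lt_compat; lra).
  assert (0 < / D) by (apply Rinv_0_lt_compat; lra).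
  assert (w * r * / u <= 0).
  { assert (w * r <= 0) by nra. nra. }
  assert (Y2 * (w * r * / u) <= 0) by nra. nra.
Qed.

Lemma sign_term' (Y2 w r u D : R) : 0 <= Y2 -> 0 < w -> 0 <= r -> 0 < u -> 0 < D -> 0 <= Y2 * (w * r / u) / D.
Proof.
  intros. unfold Rdiv. assert (0 < / u) by (apply Rinv_0_lt_compat; lra).
  assert (0 < / D) by (apply Rinv_0_lt_compat; lra).
  apply Rmult_le_pos; [|lra]. apply Rmult_le_pos; [lra|]. apply Rmult_le_pos; [|lra]. nra.
Qed.

Lemma ratio_bound b eta : 1 <= b -> (b-1)/b <= eta <= 1 -> wf b 1 <= 7/4 * wf b eta.
Proof.
  intros Hb He.
  assert (Hb0 : 0 < b) by lra.
  assert (He0 : 0 <= eta) by (assert (0 <= (b-1)/b) by (apply Rdiv_le_0_compat; lra); lra).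
  set (X := (b-1) * (ln 2 - ln (1+eta))).
  assert (Hsplit : wf b 1 = wf b eta * exp X).
  { unfold wf, Rpower, X. rewrite <- exp_plus. f_equal. replace (1+1) with 2 by ring. ring. }
  assert (Hln : ln 2 - ln (1+eta) <= (1 - eta) / (1 + eta)).
  { rewrite <- ln_div by lra. pose proof (exp_ineq1_le (ln (2 / (1+eta)))).
    rewrite exp_ln in H by (apply Rdiv_lt_0_compat; lra).
    assert (2 / (1+eta) - 1 = (1-eta)/(1+eta)) by (field; lra). lra. }
  assert (HX : X <= / 2).
  { unfold X. apply Rle_trans with ((b-1) * ((1-eta)/(1+eta))).
    apply Rmult_le_compat_l; lra.
    assert (Hbe : (b-1) * (1 - eta) <= (1 + eta) / 2).
    { assert (1 - eta <= 1 / b).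
      { assert ((b-1)/b = 1 - 1/b) by (field; lra). lra. }
      assert ((b-1) * (1-eta) <= (b-1) * (1/b)) by (apply Rmult_le_compat_l; lra).
      assert ((b-1) * (1/b) = (b-1)/b) by (field; lra). lra. }
    apply Rmult_le_reg_r with (1+eta); [lra|].
    replace ((b - 1) * ((1 - eta) / (1 + eta)) * (1 + eta)) with ((b-1)*(1-eta)) by (field; lra). lra. }
  assert (Hexp : exp X <= 7/4).
  { apply Rle_trans with (exp (/2)). destruct (Req_dec X (/2)) as [->|]; [lra|left; apply exp_increasing; lra].
    pose proof exp_le_3. assert (exp (/2) * exp (/2) = exp 1) by (rewrite <- exp_plus; f_equal; lra).
    pose proof (exp_pos (/2)). nra. }
  rewrite Hsplit. pose proof (wf_pos b eta ltac:(lra)). nra.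
Qed.

Lemma beta_ge b m d : b = beta m d -> 1 < b -> 3/2 <= b.
Proof.
  intros -> Hb. unfold beta in *.
  assert (H : INR (2*m+d) = 2 * INR m + INR d) by (rewrite plus_INR, mult_INR; simpl; ring).
  assert (H2 : (2 < 2*m+d)%nat).
  { apply INR_lt. rewrite H. simpl. lra. }
  assert (H3 : INR 3 <= INR (2*m+d)) by (apply le_INR; lia).
  rewrite H in H3. simpl in H3. lra.
Qed.

Lemma main_ineq (b N W P : R) : 3/2 <= b -> 0 < N -> 0 <= P ->
  P <= 2 * b * W -> P <= 7/2 * (N - W) -> P <= 4 * (b - 1) * N.
Proof. intros. nra. Qed.

Lemma core b c al phi Y M eta :
  3/2 <= b -> ODE b c al phi Y -> (forall t, -1 <= t <= 1 -> Rabs (phi t) <= M) ->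
  is_RInt (f0 b phi) (-1) 1 (wf b 1) -> 0 < qf c al 1 -> (b-1)/b <= eta < 1 ->
  pf b eta * phi eta ^ 2 <= 4 * (b-1) * wf b 1.
Proof.
  intros Hb Hode Hbd HI Hq1 Heta.
  set (N := wf b 1).
  assert (HN : 0 < N) by (apply wf_pos; lra).
  assert (Heta0 : 0 < eta) by (assert (0 < (b-1)/b) by (apply Rdiv_lt_0_compat; lra); lra).
  assert (Hexd : forall s, -1 < s < 1 -> ex_derive phi s).
  { intros s Hs. eexists; exact (proj1 (Hode s Hs)). }
  assert (HW : forall t, -1 < t < 1 -> is_derive (Wf b phi) t (wf b t * phi t ^ 2)).
  { intros t Ht. apply (W_deriv b phi N t HI Hexd Ht). }
  assert (HWb : forall t, -1 <= t <= 1 -> 0 <= Wf b phi t /\ Wf b phi t <= N).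
  { intros t Ht. apply (W_bounds b phi N t HI Ht). }
  assert (Hqpos : forall t, t <= 1 -> 0 < qf c al t).
  { intros t Ht. pose proof (qf_ge1 c al t Ht). lra. }
  assert (HH : forall t, -1 < t < 1 -> is_derive (Hf b c al phi Y) t
    (wf b t * ((b-1) - (b+1)*t) * phi t ^ 2
     - Y t ^ 2 * (wf b t * rf b c al t / (1+t)) / (qf c al t * wf b t) ^ 2)).
  { intros t Ht. destruct (Hode t Ht). apply H_deriv; auto. pose proof (Hqpos t ltac:(lra)); lra. }
  assert (HK : forall t, -1 < t < 1 -> is_derive (Kf b c al phi Y) t
    (wf b t ^ 2 * ((2*b-2) - 2*b*t) * phi t ^ 2 + c^2/8 * Y t ^ 2 / qf c al t ^ 2)).
  { intros t Ht. destruct (Hode t Ht). apply K_deriv; auto. pose proof (Hqpos t ltac:(lra)); lra. }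
  assert (Hr : forall t, rf b c al t = rf b c al eta - b * c^2 * (t - eta) / 8).
  { intros t. unfold rf, qf. field. }
  assert (Hc2 : 0 <= c^2) by apply pow2_ge_0.
  set (P := pf b eta * phi eta ^ 2).
  assert (HP0 : 0 <= P).
  { unfold P. apply Rmult_le_pos; [left; apply pf_pos; lra|apply pow2_ge_0]. }
  assert (HPH : P <= Hf b c al phi Y eta).
  { unfold Hf, P. assert (0 <= Y eta ^ 2 / (qf c al eta * wf b eta)).
    { apply Rdiv_le_0_compat. apply pow2_ge_0. apply Rmult_lt_0_compat; [apply Hqpos; lra|apply wf_pos; lra]. }
    lra. }
  destruct (Rle_dec (rf b c al eta) 0) as [HrA|HrB].
  -
    assert (Hm : forall T, eta < T < 1 ->
      Hf b c al phi Y eta + 2 * Wf b phi eta <= Hf b c al phi Y T + 2 * Wf b phi T).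
    { intros T HT.
      apply (mono_up (fun t => Hf b c al phi Y t + 2 * Wf b phi t)
        (fun t => (wf b t * ((b-1) - (b+1)*t) * phi t ^ 2
           - Y t ^ 2 * (wf b t * rf b c al t / (1+t)) / (qf c al t * wf b t) ^ 2)
           + 2 * (wf b t * phi t ^ 2)) (-1) 1); try lra.
      - intros t Ht. apply D_plus; [apply HH; exact Ht|].
        apply (D_eq _ _ (0 * Wf b phi t + 2 * (wf b t * phi t ^ 2))); [|ring].
        apply (D_mult (fun _ => 2) (Wf b phi)); [apply D_const|apply HW; exact Ht].
      - intros t Ht.
        assert (Hrt : rf b c al t <= 0).
        { rewrite Hr. assert (0 <= b * c^2 * (t - eta) / 8).
          { apply Rdiv_le_0_compat; [|lra]. apply Rmult_le_pos; [apply Rmult_le_pos|]; lra. } lra. }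
        pose proof (wf_pos b t ltac:(lra)) as Hw.
        assert (Hs : Y t ^ 2 * (wf b t * rf b c al t / (1+t)) / (qf c al t * wf b t) ^ 2 <= 0).
        { apply sign_term; try lra. apply pow2_ge_0.
          apply pow2_gt_0. apply Rgt_not_eq. apply Rmult_lt_0_compat; [apply Hqpos; lra|lra]. }
        assert (0 <= wf b t * ((b+1) * (1 - t)) * phi t ^ 2).
        { apply Rmult_le_pos; [apply Rmult_le_pos; [lra|apply Rmult_le_pos; lra]|apply pow2_ge_0]. }
        assert (wf b t * ((b-1) - (b+1)*t) * phi t ^ 2 + 2 * (wf b t * phi t ^ 2)
                = wf b t * ((b+1) * (1 - t)) * phi t ^ 2) by ring.
        lra. }
    assert (HHe : Hf b c al phi Y eta <= 2 * N).
    { apply Rle_plus_epsilon. intros eps Heps.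
      destruct (HK_right b c al phi Y M ltac:(lra) Hode Hbd Hq1 eps eta Heps ltac:(lra)) as [T [HT [HHT _]]].
      pose proof (Hm T HT). pose proof (HWb T ltac:(lra)). pose proof (HWb eta ltac:(lra)). lra. }
    assert (2 * N <= 4 * (b-1) * N) by nra. lra.
  -
    assert (HrB' : 0 <= rf b c al eta) by lra.
    assert (Hm1 : forall T, -1 < T < eta ->
      - (Hf b c al phi Y T - 2 * b * Wf b phi T) <= - (Hf b c al phi Y eta - 2 * b * Wf b phi eta)).
    { intros T HT.
      apply (mono_up (fun t => - (Hf b c al phi Y t - 2 * b * Wf b phi t))
        (fun t => - ((wf b t * ((b-1) - (b+1)*t) * phi t ^ 2
           - Y t ^ 2 * (wf b t * rf b c al t / (1+t)) / (qf c al t * wf b t) ^ 2)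
           - 2 * b * (wf b t * phi t ^ 2))) (-1) 1); try lra.
      - intros t Ht. pose proof (HH t Ht) as H1. pose proof (HW t Ht) as H2.
        auto_derive.
        + split; [eexists; exact H1|]. split; [eexists; exact H2|]. auto.
        + replace (Derive (fun x => Hf b c al phi Y x) t) with
            (wf b t * ((b-1) - (b+1)*t) * phi t ^ 2
             - Y t ^ 2 * (wf b t * rf b c al t / (1+t)) / (qf c al t * wf b t) ^ 2)
            by (symmetry; apply is_derive_unique; exact H1).
          replace (Derive (fun x => Wf b phi x) t) with (wf b t * phi t ^ 2)
            by (symmetry; apply is_derive_unique; exact H2).
          ring.
      - intros t Ht.
        assert (Hrt : 0 <= rf b c al t).
        { rewrite Hr. assert (b * c^2 * (t - eta) / 8 <= 0).
          { assert (0 <= b * c^2 * (eta - t) / 8).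
            { apply Rdiv_le_0_compat; [|lra]. apply Rmult_le_pos; [apply Rmult_le_pos|]; lra. }
            assert (b * c^2 * (t - eta) / 8 = - (b * c^2 * (eta - t) / 8)) by field. lra. } lra. }
        pose proof (wf_pos b t ltac:(lra)) as Hw.
        assert (Hs : 0 <= Y t ^ 2 * (wf b t * rf b c al t / (1+t)) / (qf c al t * wf b t) ^ 2).
        { apply sign_term'; try lra. apply pow2_ge_0.
          apply pow2_gt_0. apply Rgt_not_eq. apply Rmult_lt_0_compat; [apply Hqpos; lra|lra]. }
        assert (0 <= wf b t * ((b+1) * (1 + t)) * phi t ^ 2).
        { apply Rmult_le_pos; [apply Rmult_le_pos; [lra|apply Rmult_le_pos; lra]|apply pow2_ge_0]. }
        assert (wf b t * ((b-1) - (b+1)*t) * phi t ^ 2 - 2 * b * (wf b t * phi t ^ 2)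
                = - (wf b t * ((b+1) * (1 + t)) * phi t ^ 2)) by ring.
        lra. }
    assert (HHe : Hf b c al phi Y eta <= 2 * b * Wf b phi eta).
    { apply Rle_plus_epsilon. intros eps Heps.
      destruct (H_left b c al phi Y M ltac:(lra) Hode Hbd Hq1 eps eta Heps ltac:(lra)) as [T [HT HHT]].
      pose proof (Hm1 T HT). pose proof (HWb T ltac:(lra)). assert (0 <= 2 * b * Wf b phi T) by (apply Rmult_le_pos; lra). lra. }
    assert (Hm2 : forall T, eta < T < 1 ->
      Kf b c al phi Y eta + 2 * N * Wf b phi eta <= Kf b c al phi Y T + 2 * N * Wf b phi T).
    { intros T HT.
      apply (mono_up (fun t => Kf b c al phi Y t + 2 * N * Wf b phi t)
        (fun t => (wf b t ^ 2 * ((2*b-2) - 2*b*t) * phi t ^ 2 + c^2/8 * Y t ^ 2 / qf c al t ^ 2)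
           + 2 * N * (wf b t * phi t ^ 2)) (-1) 1); try lra.
      - intros t Ht. apply D_plus; [apply HK; exact Ht|].
        apply (D_eq _ _ (0 * Wf b phi t + 2 * N * (wf b t * phi t ^ 2))); [|ring].
        apply (D_mult (fun _ => 2 * N) (Wf b phi)); [apply D_const|apply HW; exact Ht].
      - intros t Ht.
        pose proof (wf_pos b t ltac:(lra)) as Hw.
        assert (HwN : wf b t <= N) by (apply wf_le1; lra).
        assert (Hs : 0 <= c^2/8 * Y t ^ 2 / qf c al t ^ 2).
        { apply Rdiv_le_0_compat. apply Rmult_le_pos; [lra|apply pow2_ge_0].
          apply pow2_gt_0. apply Rgt_not_eq. apply Hqpos; lra. }
        assert (Hp : 0 <= wf b t * (wf b t * ((2*b-2) - 2*b*t) + 2 * N)).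
        { apply Rmult_le_pos; [lra|]. assert (0 <= wf b t * (2 * b * (1 - t))) by (apply Rmult_le_pos; [lra|]; apply Rmult_le_pos; lra).
          assert (wf b t * ((2*b-2) - 2*b*t) = wf b t * (2 * b * (1 - t)) - 2 * wf b t) by ring. lra. }
        assert (0 <= wf b t * (wf b t * ((2*b-2) - 2*b*t) + 2 * N) * phi t ^ 2) by (apply Rmult_le_pos; [lra|apply pow2_ge_0]).
        assert (wf b t ^ 2 * ((2*b-2) - 2*b*t) * phi t ^ 2 + 2 * N * (wf b t * phi t ^ 2)
                = wf b t * (wf b t * ((2*b-2) - 2*b*t) + 2 * N) * phi t ^ 2) by ring.
        lra. }
    assert (HKe : Kf b c al phi Y eta <= 2 * N * (N - Wf b phi eta)).
    { apply Rle_plus_epsilon. intros eps Heps.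
      destruct (HK_right b c al phi Y M ltac:(lra) Hode Hbd Hq1 eps eta Heps ltac:(lra)) as [T [HT [_ HKT]]].
      pose proof (Hm2 T HT). pose proof (HWb T ltac:(lra)).
      assert (2 * N * Wf b phi T <= 2 * N * N) by (apply Rmult_le_compat_l; lra). lra. }
    assert (HPK : P * wf b eta <= Kf b c al phi Y eta).
    { unfold Kf, P. assert (0 <= Y eta ^ 2 / qf c al eta).
      { apply Rdiv_le_0_compat. apply pow2_ge_0. apply Hqpos; lra. }
      assert (pf b eta * phi eta ^ 2 * wf b eta = pf b eta * wf b eta * phi eta ^ 2) by ring. lra. }
    assert (Hrat : N <= 7/4 * wf b eta) by (apply ratio_bound; lra).
    pose proof (wf_pos b eta ltac:(lra)) as Hwe.
    pose proof (HWb eta ltac:(lra)) as HWe.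
    assert (HP2 : P <= 7/2 * (N - Wf b phi eta)).
    { assert (P * wf b eta <= 7/2 * (N - Wf b phi eta) * wf b eta).
      { assert (2 * N * (N - Wf b phi eta) <= 2 * (7/4 * wf b eta) * (N - Wf b phi eta)).
        { apply Rmult_le_compat_r; lra. } lra. }
      apply Rmult_le_reg_r with (wf b eta); lra. }
    apply (main_ineq b N (Wf b phi eta) P); lra.
Qed.

Theorem lemma3p7 (c : R) (d m : nat) (alpha : R) (phi : R -> R) :
  0 < c ->
  (2 <= d)%nat ->
  1 < beta m d ->
  (* phi is bounded on [-1,1] *)
  (exists M : R, forall t, -1 <= t <= 1 -> Rabs (phi t) <= M) ->
  (* phi solves the ODE on (-1,1) *)
  (forall eta, -1 < eta < 1 ->
     ex_derive phi eta /\
     is_derive (fun x => (1 - x) * rpow (1 + x) (beta m d) * Derive phi x) eta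
       (- ((alpha - c ^ 2 * (1 + eta) / 8)
            * rpow (1 + eta) (beta m d - 1) * phi eta))) ->
  (* normalization *)
  is_RInt (fun t => rpow (1 + t) (beta m d - 1) * (Rabs (phi t)) ^ 2) (-1) 1
    (rpow 2 (beta m d - 1)) ->
  alpha > c ^ 2 / 4 ->
  forall eta, a_md m d <= eta <= 1 ->
    sqrt ((1 - eta) * rpow (1 + eta) (beta m d)) * Rabs (phi eta)
      <= sqrt (rpow 2 (beta m d + 1) * (beta m d - 1)).
Proof.
  intros Hc Hd Hb1 [M HM] Hode0 HI Hal eta Heta.
  pose proof (beta_ge (beta m d) m d eq_refl Hb1) as Hb.
  assert (Ha : a_md m d = (beta m d - 1) / beta m d).
  { unfold a_md. unfold beta in *. field. lra. }
  rewrite Ha in Heta.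
  set (b := beta m d) in *.
  assert (Heta0 : 0 < eta) by (assert (0 < (b-1)/b) by (apply Rdiv_lt_0_compat; lra); lra).
  assert (Hrhs : rpow 2 (b + 1) * (b - 1) = 4 * (b - 1) * wf b 1).
  { unfold wf. rewrite rpow_eq by lra. replace (b+1) with ((b-1) + 2) by ring.
    rewrite Rpower_plus. replace (1+1) with 2 by ring.
    replace 2 with (INR 2) at 3 by (simpl; ring). rewrite Rpower_pow by lra. simpl. ring. }
  rewrite Hrhs.
  destruct (Req_dec eta 1) as [->|Hne].
  - replace (1 - 1) with 0 by ring. rewrite Rmult_0_l, sqrt_0, Rmult_0_l. apply sqrt_pos.
  - set (Y := fun x => (1 - x) * rpow (1 + x) b * Derive phi x).
    assert (Hode : ODE b c alpha phi Y).
    { intros t Ht. destruct (Hode0 t Ht) as [Hex HdY]. split.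
      - apply (D_eq _ _ (Derive phi t)); [apply Derive_correct; exact Hex|].
        unfold Y. rewrite rpow_eq by lra. rewrite Rpower_b by lra. unfold pf.
        pose proof (wf_pos b t ltac:(lra)). field. split; lra.
      - apply (D_eq _ _ _ _ HdY). unfold qf, wf. rewrite rpow_eq by lra. ring. }
    assert (HI' : is_RInt (f0 b phi) (-1) 1 (wf b 1)).
    { unfold f0, wf. replace (1+1) with 2 by ring. rewrite <- rpow_eq by lra. exact HI. }
    assert (Hq1 : 0 < qf c alpha 1) by (unfold qf; lra).
    pose proof (core b c alpha phi Y M eta Hb Hode HM HI' Hq1 ltac:(lra)) as Hcore.
    assert (Hlhs : (1 - eta) * rpow (1 + eta) b = pf b eta).
    { rewrite rpow_eq by lra. rewrite Rpower_b by lra. unfold pf. ring. }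
    rewrite Hlhs.
    assert (0 <= pf b eta) by (left; apply pf_pos; lra).
    rewrite <- (sqrt_pow2 (Rabs (phi eta))) by apply Rabs_pos.
    rewrite <- sqrt_mult by (auto; apply pow2_ge_0).
    apply sqrt_le_1_alt. rewrite pow2_abs. exact Hcore.
Qed.
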